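(* Let $\Omega\subseteq\mathbb{R}^2$ be open and let $s:\Omega\to\mathbb{R}^n$ be a smooth surface. For a nondegenerate triangle with vertices $a,b,c\in\mathbb{R}^2$ let $a'$ be the mirror vertex of $a$ (the reflection of $a$ across the line through $b$ and $c$). For points $p,q,r$ in a Euclidean space write $\langle p;q;r\rangle=p\wedge q+q\wedge r+r\wedge p$. Then for every $x\in\Omega$, $$\lim \frac{1}{\big[\langle a;b;c\rangle-\langle a';b;c\rangle\big]\cdot\mathbb{I}_2}\Big[\langle s(a);s(b);s(c)\rangle-\langle s(a');s(b);s(c)\rangle\Big] \;=\; \partial_{1}s(x)\wedge\partial_{2}s(x),$$ where the limit is taken as $(a,b,c)\to(x,x,x)$ in $\mathbb{R}^2\times\mathbb{R}^2\times\mathbb{R}^2$ over triples such that the triangle $a,b,c$ is nondegenerate (i.e. $a\wedge b+b\wedge c+c\wedge a\neq 0$) and $a'$ is a balanced mirror vertex of that triangle (with $a,b,c,a'\in\Omega$), and the convergence is in the space of bivectors $\Lambda^2\mathbb{R}^n$.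
   Context: $\wedge$ denotes the exterior (outer) product; bivectors in $\mathbb{R}^n$ are elements of $\Lambda^2\mathbb{R}^n$, with the Euclidean structure in which $\{h_j\wedge h_k\}_{j<k}$ is orthonormal for an orthonormal basis $\{h_1,\dots,h_n\}$ of $\mathbb{R}^n$. For an orthonormal basis $\{\ell_1,\ell_2\}$ of $\mathbb{R}^2$, $\mathbb{I}_2=\ell_1\wedge\ell_2$ and for a bivector $B=\beta\,\ell_1\wedge\ell_2$ in $\mathbb{R}^2$, $B\cdot\mathbb{I}_2=\beta$; note $\langle a;b;c\rangle-\langle a';b;c\rangle=(a'-a)\wedge(c-b)$. $\partial_i s(x)=\sum_j \partial_{\ell_i}\sigma_j(x)\,h_j$ where $\sigma_j=s\cdot h_j$. A real function $\psi:\Omega\to\mathbb{R}$ is smooth if it is $C^2$ on $\Omega$ and the eigenvalues of its Hessian are bounded in absolute value uniformly on $\Omega$; a surface $s:\Omega\to\mathbb{R}^n$ is smooth if every component $\sigma_j$ is a smooth function. The mirror vertex of $a$ in the nondegenerate triangle $a,b,c$ is $a'=-\big[a+2b\frac{(a-c)\cdot(c-b)}{|c-b|^2}+2c\frac{(b-a)\cdot(c-b)}{|c-b|^2}\big]$; it is balanced if $\bar a=\frac12(a+a')$ lies in the closed segment $[b,c]$. *)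

(* Defs.v *)
From HB Require Import structures.
From mathcomp Require Import all_boot all_order all_algebra.
From mathcomp Require Import all_classical all_reals all_analysis.
Set Implicit Arguments. Unset Strict Implicit. Unset Printing Implicit Defensive.
Import Order.TTheory GRing.Theory Num.Theory.
Import numFieldNormedType.Exports.
Local Open Scope classical_set_scope.
Local Open Scope ring_scope.

Section Defs.
Variable R : realType.

(* A bivector of Lambda^2 R^m is
   represented by an antisymmetric m x m matrix B; its coordinate on the
   orthonormal basis vector h_j /\ h_k (j < k) is B j k. *)
Definition wedge (m : nat) (u v : 'rV[R]_m) : 'M[R]_m :=
  \matrix_(j, k) (u ord0 j * v ord0 k - u ord0 k * v ord0 j).

Definition tri (m : nat) (p q r : 'rV[R]_m) : 'M[R]_m :=
  wedge p q + wedge q r + wedge r p.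

(* For a bivector B = beta l1/\l2 of R^2, B . I_2 = beta. *)
Definition dotI2 (B : 'M[R]_2) : R := B ord0 (@Ordinal 2 1 isT).

Definition dot2 (u v : 'rV[R]_2) : R := \sum_(i < 2) u ord0 i * v ord0 i.

Definition mirror (a b c : 'rV[R]_2) : 'rV[R]_2 :=
  - (a + ((2 * dot2 (a - c) (c - b)) / dot2 (c - b) (c - b)) *: b
       + ((2 * dot2 (b - a) (c - b)) / dot2 (c - b) (c - b)) *: c).

Definition nondegenerate_triangle (a b c : 'rV[R]_2) : Prop := tri a b c != 0.

Definition balanced_mirror (a b c : 'rV[R]_2) : Prop :=
  exists2 t : R, 0 <= t <= 1 &
    (2%:R^-1) *: (a + mirror a b c) = (1 - t) *: b + t *: c.

Definition partial (i : 'I_2) (f : 'rV[R]_2 -> R) (x : 'rV[R]_2) : R :=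
  derive f x (delta_mx ord0 i).

Definition hessian (f : 'rV[R]_2 -> R) (x : 'rV[R]_2) : 'M[R]_2 :=
  \matrix_(i, j) partial j (partial i f) x.

Definition smooth_fun (Omega : set 'rV[R]_2) (f : 'rV[R]_2 -> R) : Prop :=
  [/\ (forall x, Omega x -> differentiable f x),
      (forall i x, Omega x -> differentiable (partial i f) x),
      (forall i j x, Omega x -> {for x, continuous (partial j (partial i f))}) &
      exists M : R, forall x, Omega x -> forall lam : R,
        eigenvalue (hessian f x) lam -> `|lam| <= M].

Definition smooth_surface (n : nat) (Omega : set 'rV[R]_2)
  (s : 'rV[R]_2 -> 'rV[R]_n) : Prop :=
  forall j : 'I_n, smooth_fun Omega (fun x => s x ord0 j).

Definition partial_s (n : nat) (i : 'I_2) (s : 'rV[R]_2 -> 'rV[R]_n)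
  (x : 'rV[R]_2) : 'rV[R]_n :=
  \row_j partial i (fun y => s y ord0 j) x.

End Defs.

(* Euclidean-space distance in R^2 (any norm gives the same limit notion;
   here the canonical max norm of MathComp-Analysis on row vectors). *)
Definition dist2 {R : realType} (u v : 'rV[R]_2) : R := `|u - v|%R.

(* Main.v *)
Require Import Defs.
From HB Require Import structures.
From mathcomp Require Import all_boot all_order all_algebra.
From mathcomp Require Import all_classical all_reals all_analysis.
From mathcomp Require Import ring lra.
Import Order.TTheory GRing.Theory Num.Theory.
Import numFieldNormedType.Exports.
Local Open Scope classical_set_scope.
Local Open Scope ring_scope.

Lemma rV_entry_le (R : realType) m (u : 'rV[R]_m) i : `|u ord0 i| <= `|u|.
Proof.
rewrite [leRHS]/Num.Def.normr /= mx_normrE; apply/bigmax_geP; right => /=; exists (ord0, i) => //.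
Qed.

Lemma rV_norm_lt (R : realType) m (u : 'rV[R]_m) r : 0 < r ->
  (forall i, `|u ord0 i| < r) -> `|u| < r.
Proof.
move=> r0 H; rewrite /Num.Def.normr /= mx_normrE; apply: bigmax_lt => // [[i j]] _ /=.
by rewrite (ord1 i).
Qed.

Lemma line_derive (R : realType) (f : 'rV[R]_2 -> R) p v t :
  derivable f (t *: v + p) v ->
  is_derive t 1 (fun h => f (h *: v + p)) (derive f (t *: v + p) v).
Proof.
move=> df.
have E : (fun h : R => h^-1 *: (((fun h => f (h *: v + p)) \o shift t) (h *: 1) - f (t *: v + p)))
   = (fun h => h^-1 *: ((f \o shift (t *: v + p)) (h *: v) - f (t *: v + p))).
  apply/funext => h /=; congr (_ *: (f _ - _)).
  by rewrite /shift /= [_%:A]mulr1 scalerDl addrA.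
split; first by rewrite /derivable E.
by rewrite /derive E.
Qed.

Lemma mvt_line (R : realType) (f : 'rV[R]_2 -> R) p v T L e :
  (forall t, (0 <= t <= T) \/ (T <= t <= 0) ->
     differentiable f (t *: v + p) /\ `|derive f (t *: v + p) v - L| <= e) ->
  `|f (T *: v + p) - f p - T * L| <= e * `|T|.
Proof.
move=> H; set g := fun h => f (h *: v + p).
have gp : f p = g 0 by rewrite /g scale0r add0r.
rewrite gp -/(g T).
have gd : forall x, (0 <= x <= T) \/ (T <= x <= 0) ->
    is_derive x 1 g (derive f (x *: v + p) v).
  by move=> x /H [dx _]; apply: line_derive; apply: diff_derivable.
have cg : forall a b, (forall x, a <= x <= b -> (0 <= x <= T) \/ (T <= x <= 0)) ->
    {within `[a, b], continuous g}.
  move=> a b hab; apply: derivable_within_continuous => x xin.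
  have xab : a <= x <= b by move: xin; rewrite in_itv.
  by have [] := gd x (hab x xab).
have oo : forall a b x : R, x \in `]a, b[ -> a <= x <= b.
  by move=> a b x; rewrite in_itv /= => /andP[a1 b1]; rewrite !ltW.
case: (leP 0 T) => T0.
- have [c cin E] := @MVT_segment R g (fun t => derive f (t *: v + p) v) 0 T T0
    (fun x xin => gd x (or_introl (oo _ _ _ xin))) (cg 0 T (fun x h => or_introl h)).
  have cT : 0 <= c <= T by move: cin; rewrite in_itv.
  have [_ hc] := H c (or_introl cT).
  rewrite E subr0 [T * L]mulrC -mulrBl normrM (ger0_norm T0).
  by apply: ler_wpM2r.
- have T0' : T <= 0 by apply: ltW.
  have [c cin E] := @MVT_segment R g (fun t => derive f (t *: v + p) v) T 0 T0'
    (fun x xin => gd x (or_intror (oo _ _ _ xin))) (cg T 0 (fun x h => or_intror h)).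
  have cT : T <= c <= 0 by move: cin; rewrite in_itv.
  have [_ hc] := H c (or_intror cT).
  have -> : g T - g 0 = derive f (c *: v + p) v * T.
    by rewrite -opprB E sub0r mulrN opprK.
  rewrite [T * L]mulrC -mulrBl normrM.
  by apply: ler_wpM2r.
Qed.

Definition i1 : 'I_2 := @Ordinal 2 1 isT.

Lemma I2_cases (i : 'I_2) : i = ord0 \/ i = i1.
Proof. by case: i => [[|[|//]]] pf; [left|right]; apply/val_inj. Qed.

Lemma ent (R : realType) (q : 'rV[R]_2) t i j :
  (t *: delta_mx ord0 i + q) ord0 j = (if j == i then t else 0) + q ord0 j.
Proof. by rewrite !mxE eqxx /=; case: eqP => _; rewrite ?mulr1 ?mulr0. Qed.

Lemma betw (R : realType) (a b xx r t : R) :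
  `|a - xx| < r -> `|b - xx| < r -> (0 <= t <= b - a) \/ (b - a <= t <= 0) ->
  `|a + t - xx| < r.
Proof.
rewrite !ltr_norml => /andP[h1 h2] /andP[h3 h4] [/andP[h5 h6]|/andP[h5 h6]];
  apply/andP; split; lra.
Qed.

Arguments betw {R a b xx r t}.

Lemma strict_diff (R : realType) (f : 'rV[R]_2 -> R) (x : 'rV[R]_2) (r e : R) :
  (forall y : 'rV[R]_2, (forall i, `|y ord0 i - x ord0 i| < r) ->
     differentiable f y /\ forall i, `|partial i f y - partial i f x| <= e) ->
  forall y z : 'rV[R]_2, (forall i, `|y ord0 i - x ord0 i| < r) ->
    (forall i, `|z ord0 i - x ord0 i| < r) ->
  `|f y - f z - (partial ord0 f x * (y ord0 ord0 - z ord0 ord0)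
       + partial i1 f x * (y ord0 i1 - z ord0 i1))|
  <= e * (`|y ord0 ord0 - z ord0 ord0| + `|y ord0 i1 - z ord0 i1|).
Proof.
move=> H y z hy hz.
set T0 := y ord0 ord0 - z ord0 ord0; set T1 := y ord0 i1 - z ord0 i1.
set p := T1 *: delta_mx ord0 i1 + z.
have Hy : y = T0 *: delta_mx ord0 ord0 + p.
  apply/rowP => i; rewrite ent /p ent.
  by case: (I2_cases i) => ->; rewrite /T0 /T1 /=; ring.
have S1 : `|f p - f z - T1 * partial i1 f x| <= e * `|T1|.
  apply: mvt_line => t ht.
  suff [d1 d2] : differentiable f (t *: delta_mx ord0 i1 + z) /\
     forall i, `|partial i f (t *: delta_mx ord0 i1 + z) - partial i f x| <= e.
    by split => //; exact: d2 i1.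
  apply: H => i; rewrite ent; case: (I2_cases i) => -> /=; first by rewrite add0r.
  by rewrite [t + _]addrC; exact: (betw (hz i1) (hy i1) ht).
have S2 : `|f y - f p - T0 * partial ord0 f x| <= e * `|T0|.
  rewrite {1}Hy; apply: mvt_line => t ht.
  suff [d1 d2] : differentiable f (t *: delta_mx ord0 ord0 + p) /\
     forall i, `|partial i f (t *: delta_mx ord0 ord0 + p) - partial i f x| <= e.
    by split => //; exact: d2 ord0.
  apply: H => i.
  rewrite ent /p ent; case: (I2_cases i) => -> /=.
    by rewrite add0r [t + _]addrC; exact: (betw (hz ord0) (hy ord0) ht).
  by rewrite !add0r /T1 subrK.
have -> : f y - f z - (partial ord0 f x * T0 + partial i1 f x * T1) =
   (f y - f p - T0 * partial ord0 f x) + (f p - f z - T1 * partial i1 f x) by ring.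
apply: le_trans (ler_normD _ _) _.
rewrite mulrDr; exact: lerD.
Qed.

Lemma abs_bnd (R : realDomainType) (t M : R) : `|t| <= M -> - M <= t <= M.
Proof. by rewrite ler_norml. Qed.

Lemma prod_bnd (R : realDomainType) (a b A B : R) : `|a| <= A -> `|b| <= B -> `|a * b| <= A * B.
Proof. by move=> ha hb; rewrite normrM; apply: ler_pM. Qed.

Arguments abs_bnd {R t M}.
Arguments prod_bnd {R a b A B}.

Lemma final_alg (R : realFieldType) (uj uk vj vk Aj Ak Bj Bk D K mw me C e : R) :
  Aj * Bk - Ak * Bj = K * D ->
  `|Aj| <= C * mw -> `|Ak| <= C * mw -> `|Bj| <= C * me -> `|Bk| <= C * me ->
  `|uj - Aj| <= e * mw -> `|uk - Ak| <= e * mw ->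
  `|vj - Bj| <= e * me -> `|vk - Bk| <= e * me ->
  mw * me <= 2 * `|D| -> D != 0 -> 0 <= e <= 1 -> 0 <= C -> 0 <= mw -> 0 <= me ->
  `|D^-1 * (uj * vk - uk * vj) - K| <= 2 * (4 * C + 2) * e.
Proof.
move=> hK hAj hAk hBj hBk hrj hrk hqj hqk hD D0 /andP[e0 e1] C0 mw0 me0.
have -> : D^-1 * (uj * vk - uk * vj) - K = (uj * vk - uk * vj - K * D) / D.
  by field.
have Dp : 0 < `|D| by rewrite normr_gt0.
rewrite normrM normfV ler_pdivrMr //.
have -> : uj * vk - uk * vj - K * D =
  Aj * (vk - Bk) + (uj - Aj) * Bk + (uj - Aj) * (vk - Bk)
  - Ak * (vj - Bj) - (uk - Ak) * Bj - (uk - Ak) * (vj - Bj).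
  by rewrite -hK; ring.
have t1 := abs_bnd (prod_bnd hAj hqk).
have t2 := abs_bnd (prod_bnd hrj hBk).
have t3 := abs_bnd (prod_bnd hrj hqk).
have t4 := abs_bnd (prod_bnd hAk hqj).
have t5 := abs_bnd (prod_bnd hrk hBj).
have t6 := abs_bnd (prod_bnd hrk hqj).
have hQ : (C * mw * (e * me)) = C * e * (mw * me) by ring.
have hQ2 : (e * mw * (C * me)) = C * e * (mw * me) by ring.
have hQ3 : (e * mw * (e * me)) = e * e * (mw * me) by ring.
rewrite hQ in t1 t4; rewrite hQ2 in t2 t5; rewrite hQ3 in t3 t6.
have Ce : 0 <= C * e by apply: mulr_ge0.
have b1 : C * e * (mw * me) <= C * e * (2 * `|D|) by apply: ler_wpM2l.
have ee : e * e <= e by nra.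
have Q0 : 0 <= mw * me by apply: mulr_ge0.
have b2 : e * e * (mw * me) <= e * (2 * `|D|).
  apply: le_trans (_ : e * (mw * me) <= _); first by apply: ler_wpM2r.
  by apply: ler_wpM2l.
rewrite ler_norml; apply/andP; split; lra.
Qed.

Lemma perp_bound (R : realFieldType) (w0 w1 e0 e1 : R) :
  w0 * e0 + w1 * e1 = 0 ->
  (`|w0| + `|w1|) * (`|e0| + `|e1|) <= 2 * `|w0 * e1 - w1 * e0|.
Proof.
move=> P.
have hD : (w0 * e1 - w1 * e0) ^+ 2 = (w0 ^+ 2 + w1 ^+ 2) * (e0 ^+ 2 + e1 ^+ 2).
  have -> : (w0 ^+ 2 + w1 ^+ 2) * (e0 ^+ 2 + e1 ^+ 2) =
     (w0 * e1 - w1 * e0) ^+ 2 + (w0 * e0 + w1 * e1) ^+ 2 by ring.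
  by rewrite P expr0n /= addr0.
have q0 := real_normK (num_real w0); have q1 := real_normK (num_real w1).
have q2 := real_normK (num_real e0); have q3 := real_normK (num_real e1).
have q4 := real_normK (num_real (w0 * e1 - w1 * e0)).
have n0 := normr_ge0 w0; have n1 := normr_ge0 w1.
have n2 := normr_ge0 e0; have n3 := normr_ge0 e1.
have n4 := normr_ge0 (w0 * e1 - w1 * e0).
set W0 := `|w0| in q0 n0 *; set W1 := `|w1| in q1 n1 *.
set E0 := `|e0| in q2 n2 *; set E1 := `|e1| in q3 n3 *.
set DD := `|w0 * e1 - w1 * e0| in q4 n4 *.
have hW : (W0 + W1) ^+ 2 <= 2 * (W0 ^+ 2 + W1 ^+ 2).
  have : 0 <= (W0 - W1) ^+ 2 by apply: sqr_ge0.
  lra.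
have hE : (E0 + E1) ^+ 2 <= 2 * (E0 ^+ 2 + E1 ^+ 2).
  have : 0 <= (E0 - E1) ^+ 2 by apply: sqr_ge0.
  lra.
have X2 : ((W0 + W1) * (E0 + E1)) ^+ 2 <= (2 * DD) ^+ 2.
  rewrite !exprMn.
  apply: le_trans (_ : 2 * (W0 ^+ 2 + W1 ^+ 2) * (2 * (E0 ^+ 2 + E1 ^+ 2)) <= _).
    by apply: ler_pM => //; apply: sqr_ge0.
  rewrite q4 hD q0 q1 q2 q3.
  have -> : (2 : R) ^+ 2 = 4 by rewrite expr2; lra.
  lra.
have Xge : 0 <= (W0 + W1) * (E0 + E1) by apply: mulr_ge0; lra.
have Yge : 0 <= 2 * DD by lra.
by rewrite -ler_sqr ?nnegrE.
Qed.

Lemma dot2E (R : realType) (u v : 'rV[R]_2) :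
  dot2 u v = u ord0 ord0 * v ord0 ord0 + u ord0 i1 * v ord0 i1.
Proof.
rewrite /dot2 !big_ord_recr big_ord0 /= add0r.
have -> : (widen_ord (leqnSn 1) ord_max) = ord0 :> 'I_2 by apply/val_inj.
by have -> : (ord_max : 'I_2) = i1 by apply/val_inj.
Qed.

Lemma mirrorE (R : realType) (a b c : 'rV[R]_2) i :
  mirror a b c ord0 i = - (a ord0 i
     + (2 * dot2 (a - c) (c - b)) / dot2 (c - b) (c - b) * b ord0 i
     + (2 * dot2 (b - a) (c - b)) / dot2 (c - b) (c - b) * c ord0 i).
Proof. by rewrite !mxE. Qed.

Lemma mirror_perp (R : realType) (a b c : 'rV[R]_2) :
  dot2 (c - b) (c - b) != 0 ->
  (mirror a b c ord0 ord0 - a ord0 ord0) * (c ord0 ord0 - b ord0 ord0)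
  + (mirror a b c ord0 i1 - a ord0 i1) * (c ord0 i1 - b ord0 i1) = 0.
Proof.
move=> N0; rewrite !mirrorE; move: N0; rewrite !dot2E !mxE => N0.
by field.
Qed.

Definition T2 {R : realType} (a b c : 'rV[R]_2) : R :=
  (b ord0 ord0 - a ord0 ord0) * (c ord0 i1 - a ord0 i1)
  - (b ord0 i1 - a ord0 i1) * (c ord0 ord0 - a ord0 ord0).

Lemma mirror_det (R : realType) (a b c : 'rV[R]_2) :
  dot2 (c - b) (c - b) != 0 ->
  (mirror a b c ord0 ord0 - a ord0 ord0) * (c ord0 i1 - b ord0 i1)
  - (mirror a b c ord0 i1 - a ord0 i1) * (c ord0 ord0 - b ord0 ord0) = 2 * T2 a b c.
Proof.
move=> N0; rewrite /T2 !mirrorE; move: N0; rewrite !dot2E !mxE => N0.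
by field.
Qed.

Lemma tri01 (R : realType) (a b c : 'rV[R]_2) : tri a b c ord0 i1 = T2 a b c.
Proof. rewrite /T2 !mxE; ring. Qed.

Lemma nondeg_T2 (R : realType) (a b c : 'rV[R]_2) :
  nondegenerate_triangle a b c -> T2 a b c != 0.
Proof.
move=> nd; apply/negP => /eqP T0; move: nd; rewrite /nondegenerate_triangle.
suff -> : tri a b c = 0 by rewrite eqxx.
apply/matrixP => i j; rewrite [RHS]mxE.
case: (I2_cases i) => ->; case: (I2_cases j) => ->; rewrite ?tri01 //; move: T0;
  rewrite /T2 !mxE => T0; lra.
Qed.

Lemma nondeg_N (R : realType) (a b c : 'rV[R]_2) :
  nondegenerate_triangle a b c -> dot2 (c - b) (c - b) != 0.
Proof.
move=> /nondeg_T2; apply: contra; rewrite dot2E !mxE /T2 => /eqP N0.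
have s0 : 0 <= (c ord0 ord0 - b ord0 ord0) * (c ord0 ord0 - b ord0 ord0) by rewrite -expr2 sqr_ge0.
have s1 : 0 <= (c ord0 i1 - b ord0 i1) * (c ord0 i1 - b ord0 i1) by rewrite -expr2 sqr_ge0.
have h0 : c ord0 ord0 - b ord0 ord0 = 0.
  have : (c ord0 ord0 - b ord0 ord0) * (c ord0 ord0 - b ord0 ord0) = 0 by lra.
  by move/eqP; rewrite mulf_eq0 orbb => /eqP.
have h1 : c ord0 i1 - b ord0 i1 = 0.
  have : (c ord0 i1 - b ord0 i1) * (c ord0 i1 - b ord0 i1) = 0 by lra.
  by move/eqP; rewrite mulf_eq0 orbb => /eqP.
apply/eqP.
have -> : c ord0 ord0 = b ord0 ord0 by lra.
have -> : c ord0 i1 = b ord0 i1 by lra.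
ring.
Qed.


Lemma numer_entry (R : realType) n (p p' q r : 'rV[R]_n) j k :
  (tri p q r - tri p' q r) j k =
  (p' ord0 j - p ord0 j) * (r ord0 k - q ord0 k) - (p' ord0 k - p ord0 k) * (r ord0 j - q ord0 j).
Proof. by rewrite !mxE; ring. Qed.

Lemma lin_bnd (R : realType) (g h w0 w1 C : R) : `|g| <= C -> `|h| <= C ->
  `|g * w0 + h * w1| <= C * (`|w0| + `|w1|).
Proof.
move=> hg hh; apply: le_trans (ler_normD _ _) _; rewrite mulrDr !normrM.
by apply: lerD; apply: ler_wpM2r.
Qed.

Lemma mirror_ball (R : realType) (a b c x : 'rV[R]_2) d i :
  balanced_mirror a b c ->
  `|a ord0 i - x ord0 i| < d -> `|b ord0 i - x ord0 i| < d -> `|c ord0 i - x ord0 i| < d ->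
  `|mirror a b c ord0 i - x ord0 i| < 3 * d.
Proof.
move=> [t /andP[t0 t1]]; move: (mirror a b c) => m E ha hb hc.
have Ei := congr1 (fun M : 'rV[R]_2 => M ord0 i) E; rewrite /= !mxE in Ei.
have -> : m ord0 i - x ord0 i =
   2 * (1 - t) * (b ord0 i - x ord0 i) + 2 * t * (c ord0 i - x ord0 i) - (a ord0 i - x ord0 i).
  have Em : m ord0 i = 2 * ((1 - t) * b ord0 i + t * c ord0 i) - a ord0 i.
    by rewrite -Ei; field.
  by rewrite Em; ring.
move: ha hb hc; rewrite !ltr_norml => /andP[a1 a2] /andP[b1 b2] /andP[c1 c2].
have p1 : 0 <= (1 - t) * (d - (b ord0 i - x ord0 i)) by apply: mulr_ge0; lra.
have p2 : 0 <= (1 - t) * (d + (b ord0 i - x ord0 i)) by apply: mulr_ge0; lra.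
have p3 : 0 <= t * (d - (c ord0 i - x ord0 i)) by apply: mulr_ge0; lra.
have p4 : 0 <= t * (d + (c ord0 i - x ord0 i)) by apply: mulr_ge0; lra.
apply/andP; split; nra.
Qed.

Lemma sum_bnd (R : realType) n (F : 'I_n -> R) j : (forall i, 0 <= F i) -> F j <= \sum_i F i.
Proof.
move=> F0; rewrite (bigD1 j) //= lerDl; apply: sumr_ge0 => i _; exact: F0.
Qed.

Arguments sum_bnd {R n} F j.
Arguments mirror_ball {R a b c x d} i.
Arguments rV_entry_le {R m}.

Arguments final_alg {R uj uk vj vk Aj Ak Bj Bk D K mw me C e}.
Arguments lin_bnd {R g h} w0 w1 {C}.

Theorem theorem2 (R : realType) (n : nat) (Omega : set 'rV[R]_2)
  (s : 'rV[R]_2 -> 'rV[R]_n) :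
  open Omega -> smooth_surface Omega s ->
  forall x, Omega x ->
  forall eps : R, 0 < eps -> exists2 delta : R, 0 < delta &
    forall a b c : 'rV[R]_2,
      dist2 a x < delta -> dist2 b x < delta -> dist2 c x < delta ->
      Omega a -> Omega b -> Omega c -> Omega (mirror a b c) ->
      nondegenerate_triangle a b c -> balanced_mirror a b c ->
      forall j k : 'I_n,
        `| ((dotI2 (tri a b c - tri (mirror a b c) b c))^-1 *:
              (tri (s a) (s b) (s c) - tri (s (mirror a b c)) (s b) (s c))) j k
           - wedge (partial_s ord0 s x) (partial_s (@Ordinal 2 1 isT) s x) j k |
        < eps.
Proof.
move=> Hop Hsm x Hx eps eps0.
pose sg j := fun y : 'rV[R]_2 => s y ord0 j.
pose g j := partial ord0 (sg j) x.
pose h j := partial i1 (sg j) x.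
pose C := \sum_(j < n) (`|g j| + `|h j|).
have F0 : forall j, 0 <= `|g j| + `|h j| by move=> j; apply: addr_ge0.
have C0 : 0 <= C by apply: sumr_ge0 => j _.
have gC j : `|g j| <= C.
  apply: (le_trans _ (sum_bnd (fun j => `|g j| + `|h j|) j F0)); rewrite /= lerDl //.
have hC j : `|h j| <= C.
  apply: (le_trans _ (sum_bnd (fun j => `|g j| + `|h j|) j F0)); rewrite /= lerDr //.
pose K := 4 * C + 2.
have K0 : 0 < K by rewrite /K; lra.
pose e := Num.min 1 (eps / (4 * K)).
have e0 : 0 < e by rewrite lt_min ltr01 /= divr_gt0 //; lra.
have e1 : e <= 1 by rewrite ge_min lexx.
have e2 : e * (4 * K) <= eps.
  by rewrite -ler_pdivlMr ?ge_min ?lexx ?orbT //; lra.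
have N1 : \forall y \near x, Omega y by apply: open_nbhs_nbhs; split.
have N2 : \forall y \near x, forall j i, `|partial i (sg j) y - partial i (sg j) x| <= e.
  have N3 : forall j i, \forall y \near x, `|partial i (sg j) y - partial i (sg j) x| <= e.
    move=> j i.
    have [_ dP _ _] := Hsm j.
    have := differentiable_continuous (dP i x Hx).
    move/cvgrPdist_le => /(_ e e0); apply: filterS => y; rewrite distrC; exact.
  have N4 : forall j, \forall y \near x, forall i, `|partial i (sg j) y - partial i (sg j) x| <= e.
    by move=> j; exact: (filter_forall _ (N3 j)).
  exact: (filter_forall _ N4).
have [r r0x Hr] := iffLR (nbhs_normP _ _) (filterI N1 N2).
have r0 : 0 < r by exact: r0x.
have Hball : forall y : 'rV[R]_2, (forall i, `|y ord0 i - x ord0 i| < r) ->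
    Omega y /\ forall j i, `|partial i (sg j) y - partial i (sg j) x| <= e.
  move=> y hy; apply: Hr; rewrite /ball_ /=; apply: rV_norm_lt => // i.
  by rewrite !mxE distrC.
exists (r / 3); first by apply: divr_gt0.
move=> a b c da db dc Oa Ob Oc Oa' nd bal j k.
have EB : forall y : 'rV[R]_2, dist2 y x < r / 3 -> forall i, `|y ord0 i - x ord0 i| < r / 3.
  move=> y dy i; apply: le_lt_trans dy; rewrite /dist2.
  by have := rV_entry_le (y - x) i; rewrite !mxE => H; exact: H.
have IB : forall y : 'rV[R]_2, (forall i, `|y ord0 i - x ord0 i| < r / 3) ->
    forall i, `|y ord0 i - x ord0 i| < r.
  by move=> y hy i; apply: lt_trans (hy i) _; lra.
have Ba := IB _ (EB _ da); have Bb := IB _ (EB _ db); have Bc := IB _ (EB _ dc).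
have Ba' : forall i, `|mirror a b c ord0 i - x ord0 i| < r.
  move=> i; have := mirror_ball i bal (EB _ da i) (EB _ db i) (EB _ dc i).
  by have -> : 3 * (r / 3) = r by field.
have Hsd : forall l, forall y z : 'rV[R]_2, (forall i, `|y ord0 i - x ord0 i| < r) ->
    (forall i, `|z ord0 i - x ord0 i| < r) ->
  `|sg l y - sg l z - (g l * (y ord0 ord0 - z ord0 ord0)
       + h l * (y ord0 i1 - z ord0 i1))|
  <= e * (`|y ord0 ord0 - z ord0 ord0| + `|y ord0 i1 - z ord0 i1|).
  move=> l; apply: strict_diff => y hy.
  have [Oy Hy] := Hball y hy; split; last by move=> i; exact: Hy.
  by have [dA _ _ _] := Hsm l; apply: dA.
rewrite mxE numer_entry /wedge mxE /partial_s !mxE /dotI2 numer_entry.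
have Nn := @nondeg_N R a b c nd.
have Hperp := @mirror_perp R a b c Nn.
have Hdet := @mirror_det R a b c Nn.
have HT := @nondeg_T2 R a b c nd.
pose w0 := mirror a b c ord0 ord0 - a ord0 ord0.
pose w1 := mirror a b c ord0 i1 - a ord0 i1.
pose f0 := c ord0 ord0 - b ord0 ord0.
pose f1 := c ord0 i1 - b ord0 i1.
pose D := w0 * f1 - w1 * f0.
pose mw := `|w0| + `|w1|.
pose me := `|f0| + `|f1|.
have hD : mw * me <= 2 * `|D| by apply: perp_bound.
have D0 : D != 0 by rewrite /D /w0 /w1 /f0 /f1 Hdet mulf_neq0 // pnatr_eq0.
have Sa := fun l => Hsd l (mirror a b c) a Ba' Ba.
have Sc := fun l => Hsd l c b Bc Bb.
have hK : (g j * w0 + h j * w1) * (g k * f0 + h k * f1)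
   - (g k * w0 + h k * w1) * (g j * f0 + h j * f1) = (g j * h k - g k * h j) * D.
  by rewrite /D; ring.
have e01 : 0 <= e <= 1 by rewrite e1 ltW.
have F := final_alg hK (lin_bnd _ _ (gC j) (hC j)) (lin_bnd _ _ (gC k) (hC k))
  (lin_bnd _ _ (gC j) (hC j)) (lin_bnd _ _ (gC k) (hC k))
  (Sa j) (Sa k) (Sc j) (Sc k) hD D0 e01 C0 (addr_ge0 (normr_ge0 _) (normr_ge0 _))
  (addr_ge0 (normr_ge0 _) (normr_ge0 _)).
apply: le_lt_trans F _.
have : 0 <= C * e by apply: mulr_ge0 => //; apply: ltW.
rewrite /K in e2; lra.
Qed.
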